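(* For any prime $p>3$, $$\sum_{k=1}^{p-1} {(1/2)_k^2\over (1)_k^2}\cdot{1\over k}\equiv -2H_{(p-1)/2}(1)\pmod{p^3},$$ $$\sum_{k=1}^{p-1} {(1/2)_k^2\over (1)_k^2}\cdot{1\over k^2}\equiv -2H_{(p-1)/2}(1)^2\pmod{p^2}.$$
   Context: $(y)_n=y(y+1)\cdots(y+n-1)$ denotes the Pochhammer symbol, and $H_n(1)=\sum_{k=1}^n \frac1k$. Congruences between rational numbers modulo $p^j$ mean that the difference is a rational number whose numerator is divisible by $p^j$ and whose denominator is prime to $p$. *)

(* Defs.v *)
From mathcomp Require Import all_boot all_order all_algebra.
Set Implicit Arguments. Unset Strict Implicit. Unset Printing Implicit Defensive.
Import Order.TTheory GRing.Theory Num.Theory.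
Local Open Scope ring_scope.

Definition poch (y : rat) (n : nat) : rat := \prod_(i < n) (y + i%:R).

Definition harm (n : nat) : rat := \sum_(1 <= k < n.+1) (k%:R)^-1.

Definition rat_congr (p j : nat) (a b : rat) : Prop :=
  ((p ^ j)%:Z %| numq (a - b))%Z /\ coprime `|denq (a - b)|%N p.

(* Main.v *)
Require Import Defs.
From mathcomp Require Import all_boot all_order all_algebra.
From mathcomp.algebra_tactics Require Import ring.
From mathcomp.algebra_tactics Require Import lra.
From mathcomp Require Import zify.
Set Implicit Arguments. Unset Strict Implicit. Unset Printing Implicit Defensive.
Import Order.TTheory GRing.Theory Num.Theory.
Local Open Scope ring_scope.

Section PInt.
Variable p : nat.
Hypothesis pP : prime p.

Definition pint (x : rat) : bool := coprime `|denq x|%N p.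

Lemma pintP x : pint x <-> exists a b : int, coprime `|b|%N p /\ x = a%:~R / b%:~R.
Proof.
split.
  move=> h; exists (numq x), (denq x); split => //; by rewrite divq_num_den.
move=> [a [b [cb ->]]].
have b0 : b != 0.
  apply/eqP => b0; move: cb; rewrite b0 /= /coprime gcd0n => /eqP p1.
  by move: pP; rewrite p1.
set y := a%:~R / b%:~R.
have e : (numq y * b = a * denq y)%R.
  apply: (@intr_inj rat); rewrite !intrM numqE /y.
  field; by rewrite intr_eq0.
have hd : (`|denq y| %| `|numq y| * `|b|)%N.
  by rewrite -abszM e abszM dvdn_mull.
rewrite /pint; apply: coprime_dvdl cb.
by rewrite Gauss_dvdr // in hd; rewrite coprime_sym coprime_num_den.
Qed.


Lemma cop_nz (b : int) : coprime `|b|%N p -> b != 0.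
Proof.
move=> cb; apply/eqP => b0; move: cb; rewrite b0 /= /coprime gcd0n => /eqP p1.
by move: pP; rewrite p1.
Qed.

Lemma pint_int (z : int) : pint z%:~R.
Proof. apply/pintP; exists z, 1; split; first by rewrite /= coprime1n. by rewrite divr1. Qed.

Lemma pint_nat (n : nat) : pint n%:R.
Proof. by have := pint_int n; rewrite pmulrn. Qed.

Lemma pint0 : pint 0. Proof. exact: (pint_nat 0). Qed.
Lemma pint1 : pint 1. Proof. exact: (pint_nat 1). Qed.

Lemma pintM x y : pint x -> pint y -> pint (x * y).
Proof.
move=> /pintP [a [b [cb ->]]] /pintP [c [d [cd ->]]].
apply/pintP; exists (a * c), (b * d); split.
  by rewrite abszM coprimeMl cb cd.
by rewrite !intrM mulf_div.
Qed.

Lemma pintD x y : pint x -> pint y -> pint (x + y).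
Proof.
move=> /pintP [a [b [cb ->]]] /pintP [c [d [cd ->]]].
apply/pintP; exists (a * d + c * b), (b * d); split.
  by rewrite abszM coprimeMl cb cd.
have := cop_nz cb; have := cop_nz cd.
rewrite -!(intr_eq0 rat) => hd hb.
rewrite intrD !intrM; field; by rewrite hb hd.
Qed.

Lemma pintN x : pint x -> pint (- x).
Proof. by move=> h; rewrite -mulN1r; apply: pintM => //; apply: (pint_int (-1)). Qed.

Lemma pintB x y : pint x -> pint y -> pint (x - y).
Proof. by move=> hx hy; apply: pintD => //; apply: pintN. Qed.

Lemma pintX x n : pint x -> pint (x ^+ n).
Proof. by move=> hx; elim: n => [|n ih]; rewrite ?expr0 ?pint1 // exprS pintM. Qed.

Lemma pint_inv (n : nat) : ~~ (p %| n)%N -> pint (n%:R^-1).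
Proof.
move=> h; apply/pintP; exists 1, n; split; first by rewrite /= coprime_sym prime_coprime.
by rewrite div1r pmulrn.
Qed.

Lemma pint_sum I (r : seq I) (P : pred I) (F : I -> rat) :
  (forall i, P i -> pint (F i)) -> pint (\sum_(i <- r | P i) F i).
Proof. move=> h; apply: (big_ind (fun x => is_true (pint x))) => //; [exact: pint0 | exact: pintD]. Qed.

Lemma pint_prod I (r : seq I) (P : pred I) (F : I -> rat) :
  (forall i, P i -> pint (F i)) -> pint (\prod_(i <- r | P i) F i).
Proof. move=> h; apply: (big_ind (fun x => is_true (pint x))) => //; [exact: pint1 | exact: pintM]. Qed.

Definition dv (j : nat) (x : rat) := exists y, pint y /\ x = (p%:R) ^+ j * y.

Lemma dv0 j : dv j 0. Proof. by exists 0; rewrite mulr0 pint0. Qed.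

Lemma dvD j x y : dv j x -> dv j y -> dv j (x + y).
Proof. by move=> [a [ha ->]] [b [hb ->]]; exists (a + b); rewrite pintD // mulrDr. Qed.

Lemma dvN j x : dv j x -> dv j (- x).
Proof. by move=> [a [ha ->]]; exists (- a); rewrite pintN // mulrN. Qed.

Lemma dvB j x y : dv j x -> dv j y -> dv j (x - y).
Proof. by move=> hx hy; apply: dvD => //; apply: dvN. Qed.

Lemma dvMl j a x : pint a -> dv j x -> dv j (a * x).
Proof. by move=> ha [b [hb ->]]; exists (a * b); rewrite pintM // mulrCA. Qed.

Lemma dvMr j a x : pint a -> dv j x -> dv j (x * a).
Proof. by move=> ha hx; rewrite mulrC; apply: dvMl. Qed.

Lemma dvMM i j x y : dv i x -> dv j y -> dv (i + j) (x * y).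
Proof.
by move=> [a [ha ->]] [b [hb ->]]; exists (a * b); rewrite pintM // exprD; split => //; ring.
Qed.

Lemma dv_le i j x : (i <= j)%N -> dv j x -> dv i x.
Proof.
move=> hij [a [ha ->]]; exists (p%:R ^+ (j - i) * a); split.
  by rewrite pintM // pintX // pint_nat.
by rewrite mulrA -exprD subnKC.
Qed.

Lemma dv_pint x : pint x -> dv 0 x.
Proof. by move=> h; exists x; rewrite expr0 mul1r. Qed.

Lemma dv_pint' j x : dv j x -> pint x.
Proof. by move=> [a [ha ->]]; rewrite pintM // pintX // pint_nat. Qed.

Lemma dv_p j y : pint y -> dv j (p%:R ^+ j * y).
Proof. by move=> h; exists y. Qed.

Lemma dv_div j x : dv j.+1 x -> dv j (x / p%:R).
Proof.
move=> [a [ha ->]]; exists a; split => //.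
have : (p%:R : rat) != 0 by rewrite pnatr_eq0 -lt0n prime_gt0.
move=> hp; rewrite exprS; field; exact: hp.
Qed.

Lemma dv_sum j I (r : seq I) (P : pred I) (F : I -> rat) :
  (forall i, P i -> dv j (F i)) -> dv j (\sum_(i <- r | P i) F i).
Proof. move=> h; apply: (big_ind (dv j)) => //; [exact: dv0 | exact: dvD]. Qed.

Lemma dv_congr j a b : dv j (a - b) -> rat_congr p j a b.
Proof.
move=> h; have hz := dv_pint' h; move: h.
set z := a - b => -[y [hy ez]]; split => //.
have e : (numq z * denq y = (p ^ j)%:Z * numq y * denq z)%R.
  apply: (@intr_inj rat); rewrite !intrM !numqE -pmulrn natrX ez; ring.
rewrite dvdzE; have : (`|(p ^ j)%:Z| %| `|numq z| * `|denq y|)%N.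
  by rewrite -abszM e -mulrA abszM dvdn_mulr.
rewrite Gauss_dvdl //= coprime_sym coprimeXr //.
Qed.

End PInt.

Lemma poch0 y : poch y 0 = 1. Proof. by rewrite /poch big_ord0. Qed.
Lemma pochS y k : poch y k.+1 = poch y k * (y + k%:R).
Proof. by rewrite /poch big_ord_recr. Qed.
Lemma pochSl y k : poch y k.+1 = y * poch (y + 1) k.
Proof.
rewrite /poch big_ord_recl /= addr0; congr (_ * _); apply: eq_bigr => i _.
by rewrite /bump /= add1n -addn1 natrD addrA addrC [_ + 1]addrC addrA.
Qed.
Lemma poch1 k : poch 1 k = k`!%:R.
Proof. by elim: k => [|k ih]; rewrite ?poch0 // pochS ih factS natrM -natr1 mulrC addrC. Qed.
Lemma poch_negnat (m k : nat) : (m < k)%N -> poch (- m%:R) k = 0.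
Proof.
move=> h; rewrite /poch (bigD1 (Ordinal h)) //= addNr mul0r //.
Qed.
Lemma fact_neq0 k : (k`!%:R : rat) != 0.
Proof. by rewrite pnatr_eq0 -lt0n fact_gt0. Qed.

Lemma natS0 k : (1 + k%:R : rat) != 0.
Proof. by rewrite addrC natr1 pnatr_eq0. Qed.

Definition bb (x : rat) k := poch (-x) k * poch (x+1) k / (k`!%:R)^+2.
Definition cc (x : rat) k := poch (-x) k * poch x k / (k`!%:R)^+2.
Definition EE N (x : rat) := poch (1 - x) N * poch (x+1) N / (N`!%:R)^+2.
Definition S1 N x := \sum_(1 <= k < N.+1) bb x k / k%:R.
Definition S2 N x := \sum_(1 <= k < N.+1) bb x k / (k%:R)^+2.

Lemma sum_cc N x : \sum_(k < N.+1) cc x k = EE N x.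
Proof.
elim: N => [|N ih].
  by rewrite big_ord1 /cc /EE !poch0 /= !mul1r.
rewrite big_ord_recr /= ih /cc /EE (pochSl (-x)) (pochSl x) !pochS factS natrM.
have h1 := fact_neq0 N.
have h2 : (N.+1%:R : rat) != 0 by rewrite pnatr_eq0.
rewrite -(@natr1 rat N) in h2 *.
rewrite (_ : - x + 1 = 1 - x); last by ring.
field. by rewrite h1 h2.
Qed.

Lemma bb_diff x k : x * (bb x k.+1 - bb (x-1) k.+1) = 2 * k.+1%:R * cc x k.+1.
Proof.
rewrite /bb /cc !opprB !subrK (pochSl (-x)) (pochSl x) !pochS -!(@natr1 rat k).
rewrite (_ : - x + 1 = 1 - x); last by ring.
have h1 := fact_neq0 k.+1.
field; exact: h1.
Qed.

Lemma cc_bb x k : cc x k * (x + k%:R) = x * bb x k.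
Proof.
have e : poch x k * (x + k%:R) = x * poch (x+1) k by rewrite -pochS pochSl.
rewrite /bb /cc.
transitivity (poch (-x) k * (poch x k * (x + k%:R)) / (k`!%:R)^+2); first by ring.
rewrite e; ring.
Qed.

Lemma sum_cc1 N x : \sum_(1 <= k < N.+1) cc x k = EE N x - 1.
Proof.
rewrite -sum_cc -(big_mkord xpredT) (big_ltn (ltn0Sn N)) /= /cc !poch0 /=.
by rewrite fact0; field.
Qed.

Lemma S1_diff N x : x * (S1 N x - S1 N (x-1)) = 2 * (EE N x - 1).
Proof.
rewrite /S1 -sumrB mulr_sumr -sum_cc1 mulr_sumr; apply: eq_big_nat => k /andP [hk _].
case: k hk => [//|k] _.
rewrite -mulrBl mulrA bb_diff.
have h : (k.+1%:R : rat) != 0 by rewrite pnatr_eq0.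
field; exact: natS0.
Qed.

Lemma S2_diff N x : x * (S2 N x - S2 N (x-1)) = 2 * \sum_(1 <= k < N.+1) cc x k / k%:R.
Proof.
rewrite /S2 -sumrB mulr_sumr mulr_sumr; apply: eq_big_nat => k /andP [hk _].
case: k hk => [//|k] _.
transitivity ((x*(bb x k.+1 - bb (x-1) k.+1)) / k.+1%:R^+2); first by ring.
rewrite bb_diff; field; exact: natS0.
Qed.

Definition harm' m : rat := \sum_(1 <= k < m.+1) (k%:R)^-1.
Lemma harmS m : harm m.+1 = harm m + (m.+1%:R)^-1.
Proof. by rewrite /harm big_nat_recr. Qed.
Lemma harm0 : harm 0 = 0. Proof. by rewrite /harm big_geq. Qed.

Lemma EE_nat N m : (m < N)%N -> EE N m.+1%:R = 0.
Proof.
move=> h; rewrite /EE.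
have -> : 1 - m.+1%:R = - m%:R :> rat by rewrite -natr1; ring.
rewrite poch_negnat //.
by rewrite !mul0r.
Qed.

Lemma S1_nat N m : (m <= N)%N -> S1 N m%:R = -2 * harm m.
Proof.
elim: m => [|m ih] h.
  rewrite harm0 mulr0 /S1 big_nat_cond; apply: big1 => k /andP [/andP [hk _] _].
  by rewrite /bb (poch_negnat (m:=0)) // !mul0r.
have e := S1_diff N m.+1%:R.
rewrite EE_nat // in e.
have hm : m.+1%:R - 1 = m%:R :> rat by rewrite -natr1 addrK.
rewrite hm (ih (ltnW h)) in e.
rewrite harmS.
have h1 : (m.+1%:R : rat) != 0 by rewrite pnatr_eq0.
set s := S1 N m.+1%:R in e *.
have -> : s = (m.+1%:R)^-1 * (m.+1%:R * (s - -2 * harm m)) + -2 * harm m.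
  by rewrite mulKf // subrK.
rewrite e; ring.
Qed.

Lemma sum_cck N x : x != 0 ->
  \sum_(1 <= k < N.+1) cc x k / k%:R = S1 N x - x^-1 * (EE N x - 1).
Proof.
move=> hx; rewrite -sum_cc1 mulr_sumr /S1 -sumrB; apply: eq_big_nat => k /andP [hk _].
have hk0 : (k%:R : rat) != 0 by rewrite pnatr_eq0 -lt0n.
have e := cc_bb x k.
have -> : bb x k = x^-1 * (cc x k * (x + k%:R)) by rewrite e mulKf.
field; by rewrite hx hk0.
Qed.

Lemma S2_nat N m : (m <= N)%N -> S2 N m%:R = -2 * (harm m)^+2.
Proof.
elim: m => [|m ih] h.
  rewrite harm0 expr0n mulr0 /S2 big_nat_cond; apply: big1 => k /andP [/andP [hk _] _].
  by rewrite /bb (poch_negnat (m:=0)) // !mul0r.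
have h1 : (m.+1%:R : rat) != 0 by rewrite pnatr_eq0.
have e := S2_diff N m.+1%:R.
rewrite (sum_cck _ h1) EE_nat // S1_nat // harmS in e.
have hm : m.+1%:R - 1 = m%:R :> rat by rewrite -natr1 addrK.
rewrite hm (ih (ltnW h)) in e.
rewrite harmS.
set s := S2 N m.+1%:R in e *.
have -> : s = (m.+1%:R)^-1 * (m.+1%:R * (s - -2 * (harm m)^+2)) + -2 * (harm m)^+2.
  by rewrite mulKf // subrK.
rewrite e; ring.
Qed.

Definition alpha (j : nat) : rat := (j%:R + 1/2)^+2.
Definition PP k (v : rat) := \prod_(j < k) (alpha j - v).

Lemma bb_prod x k : bb x k = PP k ((x + 1/2)^+2) / (k`!%:R)^+2.
Proof.
rewrite /bb /PP /poch -big_split /=; congr (_ / _); apply: eq_bigr => j _.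
rewrite /alpha; field; by [].
Qed.

Section PA.
Variable p : nat.
Hypothesis pP : prime p.
Hypothesis p3 : (3 < p)%N.

Lemma three k s : dv p 2 s ->
  [/\ pint p (PP k 0), pint p (PP k s) & pint p (PP k (9 * s))] /\
  [/\ dv p 2 (PP k s - PP k 0), dv p 2 (PP k (9 * s) - PP k s) &
      dv p 4 (PP k (9 * s) - 9 * PP k s + 8 * PP k 0)].
Proof.
move=> hs; have ps := dv_pint' pP hs.
have pa : forall j, pint p (alpha j).
  move=> j; rewrite /alpha; apply: (pintX pP); apply: (pintD pP); first exact: (pint_nat pP).
  rewrite div1r; apply: (pint_inv pP) => //.
  by apply/negP => /(dvdn_leq (isT : (0 < 2)%N)) => h; lia.
have p9 : pint p 9 by apply: (pint_nat pP 9).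
have p8 : pint p 8 by apply: (pint_nat pP 8).
elim: k => [|k [[h0 h1 h9] [d10 d91 d4]]].
  rewrite /PP !big_ord0 subrr.
  split; split; try exact: (pint1 pP); try exact: (dv0 pP).
rewrite /PP !big_ord_recr /= -!/(PP k _).
set G0 := PP k 0 in h0 d10 d4 *; set G1 := PP k s in h1 d10 d91 d4 *.
set G9 := PP k (9 * s) in h9 d91 d4 *; set a := alpha k.
have pak := pa k.
split; split.
- by rewrite pintM // pintB // pint0.
- by rewrite pintM // pintB.
- by rewrite pintM // pintB // pintM.
- have -> : G1 * (a - s) - G0 * (a - 0) = a * (G1 - G0) - G1 * s by ring.
  apply: (dvB pP); first exact: (dvMl pP).
  exact: (dvMl pP).
- have -> : G9 * (a - 9 * s) - G1 * (a - s) = a * (G9 - G1) - (9 * G9 - G1) * s by ring.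
  apply: (dvB pP); first exact: (dvMl pP).
  by apply: (dvMl pP) => //; rewrite pintB // pintM.
- have -> : G9 * (a - 9 * s) - 9 * (G1 * (a - s)) + 8 * (G0 * (a - 0))
     = a * (G9 - 9 * G1 + 8 * G0) - 9 * ((G9 - G1) * s) by ring.
  apply: (dvB pP); first exact: (dvMl pP).
  by apply: (dvMl pP) => //; apply: (dvMM pP (i:=2) (j:=2)).
Qed.


Lemma nd_k k : (0 < k < p)%N -> ~~ (p %| k)%N.
Proof. move=> /andP [h0 h1]; apply/negP => /(dvdn_leq h0) h; lia. Qed.

Lemma nd_fact k : (k < p)%N -> ~~ (p %| k`!)%N.
Proof.
elim: k => [|k ih] h; first by rewrite fact0 dvdn1; apply/eqP => e; move: p3; rewrite e.
rewrite factS Euclid_dvdM // negb_or ih ?(ltnW h) // andbT nd_k //.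
Qed.

Lemma pint_w k : (0 < k < p)%N -> pint p (((k`!%:R)^+2)^-1 / k%:R).
Proof.
move=> hk; apply: (pintM pP); last by apply: (pint_inv pP); exact: nd_k.
rewrite -natrX; apply: (pint_inv pP); rewrite Euclid_dvdX // negb_and nd_fact //; lia.
Qed.

Lemma pint_w2 k : (0 < k < p)%N -> pint p (((k`!%:R)^+2)^-1 / (k%:R)^+2).
Proof.
move=> hk; apply: (pintM pP); last by rewrite -exprVn; apply: (pintX pP); apply: (pint_inv pP); exact: nd_k.
rewrite -natrX; apply: (pint_inv pP); rewrite Euclid_dvdX // negb_and nd_fact //; lia.
Qed.

Variable n : nat.
Hypothesis hpn : p = n.*2.+1.

Lemma ep : p%:R = 2 * n%:R + 1 :> rat.
Proof. by rewrite hpn -natr1 -addnn natrD; ring. Qed.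

Definition ss : rat := (p%:R / 2)^+2.

Lemma dv_ss : dv p 2 ss.
Proof.
exists (1/4); split; last by rewrite /ss; field.
rewrite div1r; apply: (pint_inv pP); apply/negP => /(dvdn_leq (isT : (0 < 4)%N)) => h; lia.
Qed.

Lemma S1_PP x : S1 n.*2 x = \sum_(1 <= k < p) (((k`!%:R)^+2)^-1 / k%:R) * PP k ((x + 1/2)^+2).
Proof.
rewrite /S1 hpn; apply: eq_bigr => k _; rewrite bb_prod; ring.
Qed.

Lemma S2_PP x : S2 n.*2 x = \sum_(1 <= k < p) (((k`!%:R)^+2)^-1 / (k%:R)^+2) * PP k ((x + 1/2)^+2).
Proof.
rewrite /S2 hpn; apply: eq_bigr => k _; rewrite bb_prod; ring.
Qed.

Lemma S_three : dv p 4 (S1 n.*2 (n%:R + p%:R) - 9 * S1 n.*2 n%:R + 8 * S1 n.*2 (-(1/2))).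
Proof.
have e9 : (n%:R + p%:R + 1/2)^+2 = 9 * ss by rewrite /ss ep; field.
have e1 : (n%:R + 1/2)^+2 = ss by rewrite /ss ep; field.
have e0 : (-(1/2) + 1/2)^+2 = 0 :> rat by rewrite addNr expr0n.
rewrite !S1_PP e9 e1 e0 !mulr_sumr -sumrB -big_split /=.
rewrite big_nat_cond; apply: (dv_sum pP) => k /andP [hk _].
have [_ [_ _ d4]] := three k dv_ss.
have -> : ((k`!%:R ^+ 2)^-1 / k%:R) * PP k (9 * ss) - 9 * (((k`!%:R ^+ 2)^-1 / k%:R) * PP k ss) +
  8 * (((k`!%:R ^+ 2)^-1 / k%:R) * PP k 0) = ((k`!%:R ^+ 2)^-1 / k%:R) *
  (PP k (9 * ss) - 9 * PP k ss + 8 * PP k 0) by ring.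
by apply: (dvMl pP) => //; apply: pint_w.
Qed.

Lemma S_two : dv p 2 (S2 n.*2 n%:R - S2 n.*2 (-(1/2))).
Proof.
have e1 : (n%:R + 1/2)^+2 = ss by rewrite /ss ep; field.
have e0 : (-(1/2) + 1/2)^+2 = 0 :> rat by rewrite addNr expr0n.
rewrite !S2_PP e1 e0 -sumrB.
rewrite big_nat_cond; apply: (dv_sum pP) => k /andP [hk _].
have [_ [d10 _ _]] := three k dv_ss.
rewrite -mulrBr; by apply: (dvMl pP) => //; apply: pint_w2.
Qed.

End PA.

Section Pair.
Variables (R : Type) (idx : R) (op : Monoid.com_law idx).

Lemma pair_big (F : nat -> R) n :
  \big[op/idx]_(0 <= i < (n + n)%N) F i = \big[op/idx]_(0 <= i < n) op (F i) (F (n + n - i.+1)%N).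
Proof.
rewrite [LHS](@big_cat_nat _ _ _ n) ?leq_addr //= big_split /=; congr (op _ _).
rewrite big_nat_rev -{1}[n]add0n big_addn addnK; apply: eq_bigr => i _.
congr F; lia.
Qed.

Lemma mid_big (F : nat -> R) n :
  \big[op/idx]_(0 <= i < (n + n.+1)%N) F i =
  op (F n) (\big[op/idx]_(0 <= i < n) op (F (n - i.+1)%N) (F (n.+1 + i)%N)).
Proof.
have hn : (n < n + n.+1)%N by lia.
have e1 : \big[op/idx]_(0 <= i < n) F i = \big[op/idx]_(0 <= i < n) F (n - i.+1)%N.
  by rewrite big_nat_rev add0n.
have e2 : \big[op/idx]_(n.+1 <= i < (n + n.+1)%N) F i = \big[op/idx]_(0 <= i < n) F (n.+1 + i)%N.
  rewrite -{1}[n.+1]add0n big_addn; have -> : (n + n.+1 - n.+1 = n)%N by lia.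
  by apply: eq_bigr => i _; rewrite addnC.
rewrite [LHS](@big_cat_nat _ _ _ n) ?leq_addr //= (big_ltn hn) e1 e2 big_split /=.
by rewrite Monoid.mulmCA.
Qed.
End Pair.

Lemma E4 N x : EE N (x + 1) * (N%:R - x) * (x + 1) = EE N x * (- x) * (x + 1 + N%:R).
Proof.
have a : poch (-x) N * (-x + N%:R) = -x * poch (1 - x) N.
  by rewrite -pochS pochSl (_ : -x + 1 = 1 - x) //; ring.
have b : (x + 1) * poch (x + 1 + 1) N = poch (x + 1) N * (x + 1 + N%:R).
  by rewrite -pochSl pochS.
rewrite /EE (_ : 1 - (x + 1) = - x); last by ring.
transitivity ((poch (-x) N * (-x + N%:R)) * ((x + 1) * poch (x + 1 + 1) N) / (N`!%:R)^+2).
  by ring.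
rewrite a b; ring.
Qed.

Lemma rho_eq (p i : nat) : (i.+1 < p)%N ->
  -2 / (p%:R - i.+1%:R) - 2 / (p%:R + i.+1%:R) + 2 * p%:R * (2 / (i.+1%:R * (p%:R - i.+1%:R)))
    + 4 * p%:R ^+ 2 / i.+1%:R ^+ 3 =
  p%:R^+4 * (4 * ((i.+1%:R)^-1 ^+ 3 * (p%:R - i.+1%:R)^-1 * (p%:R + i.+1%:R)^-1)) :> rat.
Proof.
move=> h.
have hm := ler0n rat i; have hp := ler0n rat p.
have hpl : (i.+1%:R < p%:R :> rat) by rewrite ltr_nat.
field; apply/and3P; split; rewrite ?(addrC 1 (i%:R)) natr1.
- by rewrite -natrD pnatr_eq0 addnS.
- rewrite -natrB; [rewrite pnatr_eq0; lia | lia].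
- by rewrite pnatr_eq0.
Qed.

Section PB.
Variable p : nat.
Hypothesis pP : prime p.
Hypothesis p3 : (3 < p)%N.

Lemma prod1 (z : nat -> rat) (r : seq nat) : (forall i, i \in r -> pint p (z i)) ->
  dv p 1 (\prod_(i <- r) (1 + p%:R * z i) - 1).
Proof.
elim: r => [|a r ih] hz0; first by rewrite big_nil subrr; exact: (dv0 pP).
have hz : pint p (z a) by apply: hz0; rewrite inE eqxx.
have {ih} ih : dv p 1 (\prod_(i <- r) (1 + p%:R * z i) - 1) by apply: ih => i hi; apply: hz0; rewrite inE hi orbT.
rewrite big_cons.
set P := \prod_(i <- r) _ in ih *.
have -> : (1 + p%:R * z a) * P - 1 = (P - 1) + p%:R * (z a * P) by ring.
apply: (dvD pP) => //; apply: (dv_p 1); rewrite (pintM pP) //.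
have -> : P = (P - 1) + 1 by rewrite subrK.
by rewrite (pintD pP) ?(pint1 pP) // (dv_pint' pP ih).
Qed.

Lemma prod2 (y : nat -> rat) (r : seq nat) : (forall i, i \in r -> pint p (y i)) ->
  dv p 4 (\prod_(i <- r) (1 + p%:R^+2 * y i) - 1 - p%:R^+2 * \sum_(i <- r) y i).
Proof.
elim: r => [|a r ih] hy0; first by rewrite big_nil big_nil mulr0 !subrr; exact: (dv0 pP).
have hya : pint p (y a) by apply: hy0; rewrite inE eqxx.
have hy : forall i, i \in r -> pint p (y i) by move=> i hi; apply: hy0; rewrite inE hi orbT.
have {ih} ih := ih hy.
rewrite !big_cons.
set P := \prod_(i <- r) _ in ih *; set Y := \sum_(i <- r) _ in ih *.
have -> : (1 + p%:R^+2 * y a) * P - 1 - p%:R^+2 * (y a + Y) =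
   (P - 1 - p%:R^+2 * Y) + (p%:R^+2 * y a) * (P - 1 - p%:R^+2 * Y + p%:R^+2 * Y) by ring.
apply: (dvD pP) => //; apply: (dvMM pP (i := 2) (j := 2)); first exact: (dv_p 2 hya).
apply: (dvD pP); first exact: (dv_le pP _ ih).
apply: (dv_p 2); rewrite /Y big_seq; apply: (pint_sum pP) => i hi; exact: hy.
Qed.


Variable n : nat.
Hypothesis hpn : p = n.*2.+1.

Lemma poch_nat y k : poch y k = \prod_(0 <= i < k) (y + i%:R).
Proof. by rewrite /poch big_mkord. Qed.

Lemma E1 : EE n.*2 p%:R = \prod_(0 <= i < n.*2) (1 + p%:R / (i.+1)%:R).
Proof.
set N := n.*2.
have hN : p = N.+1 by [].
have f1 : N`!%:R = \prod_(0 <= i < N) (1 + i%:R) :> rat by rewrite -poch1 poch_nat.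
have a1 : poch (1 - p%:R) N = \prod_(0 <= i < N) (i.+1%:R) :> rat.
  rewrite poch_nat big_nat_rev /= add0n big_nat_cond.
  rewrite (eq_bigr (fun i => (-1) * i.+1%:R)); last first.
    move=> i /andP [/andP [_ hi] _]; rewrite hN natrB // -!natr1; ring.
  rewrite -big_nat_cond big_split /= prodr_const_nat subn0.
  by rewrite /N -mul2n exprM sqrrN !expr1n mul1r.
rewrite /EE a1 f1 poch_nat.
rewrite (eq_bigr (fun i => (p%:R + 1 + i%:R) / (1 + i%:R))); last first.
  by move=> i _; rewrite -natr1; field; rewrite addrC natr1 pnatr_eq0.
rewrite prodf_div.
have : \prod_(0 <= i < N) (1 + i%:R) != 0 :> rat by rewrite -f1 fact_neq0.
have -> : \prod_(0 <= i < N) i.+1%:R = \prod_(0 <= i < N) (1 + i%:R) :> rat.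
  by apply: eq_bigr => i _; rewrite -natr1 addrC.
move=> h; field; exact: h.
Qed.

Definition yy (i : nat) : rat := 2 / ((i.+1)%:R * (p - i.+1)%:R).

Lemma pint_yy i : (i < n)%N -> pint p (yy i).
Proof.
move=> hi; rewrite /yy invfM; apply: (pintM pP); first exact: (pint_nat pP 2).
apply: (pintM pP); apply: (pint_inv pP); apply: (nd_k pP p3); lia.
Qed.

Lemma E2 : EE n.*2 p%:R = \prod_(0 <= i < n) (1 + p%:R^+2 * yy i).
Proof.
rewrite E1 -addnn pair_big; apply: eq_big_nat => i /andP [_ hi].
have -> : (n + n - i.+1).+1 = (p - i.+1)%N by rewrite hpn; lia.
have h1 : (p - i.+1)%:R != 0 :> rat by rewrite pnatr_eq0; lia.
have h2 : (i.+1)%:R != 0 :> rat by rewrite pnatr_eq0.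
rewrite /yy; move: h1; rewrite natrB ?hpn; last by lia.
rewrite -hpn => h1.
rewrite -[LHS]/((1 + p%:R / i.+1%:R) * (1 + p%:R / (p%:R - i.+1%:R))).
field; rewrite (addrC 1 i%:R) natr1; by rewrite h1 h2.
Qed.

Lemma E3 : dv p 4 (EE n.*2 p%:R - 1 - p%:R^+2 * \sum_(0 <= i < n) yy i).
Proof. rewrite E2; apply: prod2 => i; rewrite mem_index_iota => /andP [_ hi]; exact: pint_yy. Qed.

Lemma Ep1 : dv p 1 (EE n.*2 p%:R - 1).
Proof.
have -> : EE n.*2 p%:R - 1 = (EE n.*2 p%:R - 1 - p%:R^+2 * \sum_(0 <= i < n) yy i) +
   p%:R ^+ 2 * \sum_(0 <= i < n) yy i by ring.
apply: (dvD pP); first exact: (dv_le pP _ E3).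
apply: (dv_le pP (j := 2)) => //; apply: (dv_p 2).
rewrite big_seq; apply: (pint_sum pP) => i; rewrite mem_index_iota => /andP [_ hi]; exact: pint_yy.
Qed.

Lemma E5 m : EE n.*2 (p%:R + m.+1%:R) = EE n.*2 p%:R *
   (2 * p%:R^+2 / (m.+1%:R * (p%:R + m.+1%:R))) * \prod_(1 <= i < m.+1) (1 + 2 * p%:R / i%:R).
Proof.
have eN : (n.*2)%:R = p%:R - 1 :> rat by rewrite hpn -natr1 addrK.
have hp0 : p%:R != 0 :> rat by rewrite pnatr_eq0 -lt0n prime_gt0.
have hpm : forall k, p%:R + k%:R != 0 :> rat.
  by move=> k; rewrite -natrD pnatr_eq0 addn_eq0 negb_and -lt0n prime_gt0.
elim: m => [|m ih].
  have e := E4 (n.*2) (p%:R).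
  rewrite eN in e; rewrite big_geq // mulr1 (_ : 1%:R = 1) //.
  have h1 : (p%:R + 1 : rat) != 0 by have := hpm 1%N.
  have -> : EE n.*2 (p%:R + 1) = EE n.*2 (p%:R + 1) * (p%:R - 1 - p%:R) * (p%:R + 1) / (-(p%:R + 1)).
    field; by rewrite h1.
  rewrite e; field; by rewrite h1.
have e := E4 (n.*2) (p%:R + m.+1%:R).
rewrite big_nat_recr //=.
have em2 : (m.+2%:R : rat) = m.+1%:R + 1 by rewrite natr1.
have h2 : (m.+1%:R : rat) != 0 by rewrite pnatr_eq0.
have h3 : (m.+1%:R + 1 : rat) != 0 by rewrite natr1 pnatr_eq0.
have h1 : (p%:R + m.+1%:R + 1 : rat) != 0 by rewrite -addrA natr1 hpm.
rewrite eN in e.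
have h4 : (p%:R - 1 - (p%:R + m.+1%:R) : rat) != 0.
  by rewrite (_ : p%:R - 1 - (p%:R + m.+1%:R) = - (m.+1%:R + 1)) ?oppr_eq0 //; ring.
set m1 := m.+1%:R in e ih h2 h3 h1 h4 *.
rewrite em2 addrA.
have -> : EE n.*2 (p%:R + m1 + 1) = EE n.*2 (p%:R + m1 + 1) * (p%:R - 1 - (p%:R + m1)) *
   (p%:R + m1 + 1) / ((p%:R - 1 - (p%:R + m1)) * (p%:R + m1 + 1)).
  have hm := ler0n rat m; have hp := ler0n rat p.
  field; repeat (apply/andP; split); apply/eqP => ?; lra.
rewrite e ih.
have hm := ler0n rat m; have hp := ler0n rat p.
field; repeat (apply/andP; split); apply/eqP => ?; lra.
Qed.

Lemma dv_shift i j z : dv p j z -> dv p (i + j) (p%:R ^+ i * z).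
Proof.
move=> h; have := dvMM pP (dv_p i (pint1 pP)) h.
by rewrite mulr1.
Qed.

Lemma pint_invpm m : (m.+1 < p)%N -> pint p ((p%:R + m.+1%:R)^-1).
Proof.
move=> hm; rewrite -natrD; apply: (pint_inv pP).
rewrite dvdn_addr //; apply: (nd_k pP p3); lia.
Qed.

Lemma pint_invm m : (m.+1 < p)%N -> pint p ((m.+1%:R)^-1).
Proof. move=> hm; apply: (pint_inv pP); apply: (nd_k pP p3); lia. Qed.

Lemma E6 m : (m < n)%N ->
  dv p 3 (2 * EE n.*2 (p%:R + m.+1%:R) / (p%:R + m.+1%:R) - 4 * p%:R^+2 / m.+1%:R^+3).
Proof.
move=> hmn.
have hmp : (m.+1 < p)%N by lia.
pose PI : rat := \prod_(1 <= i < m.+1) (1 + 2 * p%:R / i%:R).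
have dPI : dv p 1 (PI - 1).
  rewrite /PI (eq_bigr (fun i => 1 + p%:R * (2 * i%:R^-1))); last by move=> i _; ring.
  apply: prod1 => i; rewrite mem_index_iota => /andP [h1 h2].
  apply: (pintM pP); first exact: (pint_nat pP 2).
  apply: (pint_inv pP); apply: (nd_k pP p3); lia.
have pPI : pint p PI.
  have -> : PI = (PI - 1) + 1 by rewrite subrK.
  by rewrite (pintD pP) ?(pint1 pP) // (dv_pint' pP dPI).
pose E : rat := EE n.*2 p%:R.
have dE : dv p 1 (E - 1) := Ep1.
have pE : pint p E.
  have -> : E = (E - 1) + 1 by rewrite subrK.
  by rewrite (pintD pP) ?(pint1 pP) // (dv_pint' pP dE).
have a := pint_invpm hmp; have b := pint_invm hmp.
set u := (p%:R + m.+1%:R)^-1 in a *; set v := (m.+1%:R)^-1 in b *.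
have hu : (p%:R + m.+1%:R) * u = 1.
  by rewrite /u divff // -natrD pnatr_eq0 addn_eq0 negb_and -lt0n prime_gt0.
have hv : m.+1%:R * v = 1 by rewrite /v divff // pnatr_eq0.
have -> : 2 * EE n.*2 (p%:R + m.+1%:R) / (p%:R + m.+1%:R) - 4 * p%:R^+2 / m.+1%:R^+3 =
  p%:R^+2 * (4 * v * ((E * PI - 1) * u^+2 + (u^+2 - v^+2))).
  rewrite E5 -/PI -/E.
  have -> : (p%:R + m.+1%:R)^-1 = u by [].
  rewrite -/u.
  rewrite /u /v; have hm := ler0n rat m; have hp := ler0n rat p.
  field; repeat (apply/andP; split); apply/eqP => ?; lra.
apply: (dv_shift 2 (j := 1)); apply: (dvMl pP); first by rewrite !(pintM pP) // (pint_nat pP 4).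
apply: (dvD pP).
  apply: (dvMr pP); first exact: (pintX pP).
  have -> : E * PI - 1 = (E - 1) * PI + (PI - 1) by ring.
  by apply: (dvD pP) => //; apply: (dvMr pP).
have -> : u^+2 - v^+2 = p%:R * (- (p%:R + 2 * m.+1%:R) * u^+2 * v^+2).
  rewrite /u /v; have hm := ler0n rat m; have hp := ler0n rat p.
  field; repeat (apply/andP; split); apply/eqP => ?; lra.
apply: (dv_p 1); apply: (pintM pP); last exact: (pintX pP).
apply: (pintM pP); last exact: (pintX pP).
apply: (pintN pP); apply: (pintD pP); first exact: (pint_nat pP).
by apply: (pintM pP); [exact: (pint_nat pP 2) | exact: (pint_nat pP)].
Qed.

Lemma g_eq k : S1 n.*2 (n + k.+1)%N%:R - S1 n.*2 (n + k)%N%:R =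
   2 * (EE n.*2 (n + k.+1)%N%:R - 1) / (n + k.+1)%N%:R.
Proof.
have hx : ((n + k.+1)%N%:R : rat) != 0 by rewrite pnatr_eq0 addnS.
have e := S1_diff n.*2 (n + k.+1)%N%:R.
have ee : (n + k.+1)%N%:R - 1 = (n + k)%N%:R :> rat by rewrite addnS -natr1 addrK.
rewrite ee in e; rewrite -e.
have hn := ler0n rat n; have hk := ler0n rat k.
field; repeat (apply/andP; split); apply/eqP => ?; lra.
Qed.



Lemma Ddv : dv p 3 (S1 n.*2 (n%:R + p%:R) - S1 n.*2 n%:R).
Proof.
have hp' : p = (n + n.+1)%N by rewrite hpn; lia.
pose f k := S1 n.*2 (n + k)%N%:R.
pose g k := 2 * (EE n.*2 (n + k.+1)%N%:R - 1) / (n + k.+1)%N%:R.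
have eT : S1 n.*2 (n%:R + p%:R) - S1 n.*2 n%:R = \sum_(0 <= k < (n + n.+1)%N) g k.
  have := telescope_sumr f (leq0n (n + n.+1)); rewrite /f addn0 -hp' natrD => <-.
  apply: eq_bigr => k _; exact: g_eq.
rewrite eT.
have -> : \sum_(0 <= k < (n + n.+1)%N) g k = g n + \sum_(0 <= i < n) (g (n - i.+1)%N + g (n.+1 + i)%N).
  by rewrite mid_big.
have hp0 : (p%:R : rat) != 0 by rewrite pnatr_eq0 -lt0n prime_gt0.
have gn : g n = 2 * (EE n.*2 p%:R - 1) / p%:R by rewrite /g -hp'.
pose A := EE n.*2 p%:R.
pose dl := A - 1 - p%:R^+2 * \sum_(0 <= i < n) yy i.
pose tau i := 2 * EE n.*2 (p%:R + i.+1%:R) / (p%:R + i.+1%:R) - 4 * p%:R^+2 / i.+1%:R^+3.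
pose rho i := -2 / (p%:R - i.+1%:R) - 2 / (p%:R + i.+1%:R) + 2 * p%:R * yy i + 4 * p%:R^+2 / i.+1%:R^+3.
have gl : forall i, (i < n)%N -> g (n - i.+1)%N = -2 / (p%:R - i.+1%:R).
  move=> i hi; rewrite /g.
  have -> : (n + (n - i.+1).+1)%N = (n + n - i.+1).+1 by lia.
  rewrite EE_nat; last by rewrite -addnn; lia.
  rewrite -natrB; last by lia.
  have -> : ((n + n - i.+1).+1 = p - i.+1)%N by lia.
  by rewrite sub0r mulrN1.
have gr : forall i, g (n.+1 + i)%N = 2 * (EE n.*2 (p%:R + i.+1%:R) - 1) / (p%:R + i.+1%:R).
  move=> i; rewrite /g -natrD.
  by have -> : (n + (n.+1 + i).+1 = p + i.+1)%N by lia.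
have eq2 : g n + \sum_(0 <= i < n) (g (n - i.+1)%N + g (n.+1 + i)%N) =
   2 * dl / p%:R + \sum_(0 <= i < n) (tau i + rho i).
  rewrite gn (eq_big_nat _ _ (F2 := fun i => -2 / (p%:R - i.+1%:R) +
      2 * (EE n.*2 (p%:R + i.+1%:R) - 1) / (p%:R + i.+1%:R))); last first.
    by move=> i /andP [_ hi]; rewrite gl // gr.
  rewrite /dl -/A.
  have -> : \sum_(0 <= i < n) (tau i + rho i) = \sum_(0 <= i < n) (-2 / (p%:R - i.+1%:R) +
      2 * (EE n.*2 (p%:R + i.+1%:R) - 1) / (p%:R + i.+1%:R)) + \sum_(0 <= i < n) (2 * p%:R * yy i).
    rewrite -big_split /=; apply: eq_bigr => i _; rewrite /tau /rho; ring.
  rewrite -mulr_sumr; field; exact: hp0.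
rewrite eq2; apply: (dvD pP).
  apply: (dv_div pP); apply: (dvMl pP); first exact: (pint_nat pP 2).
  exact: E3.
rewrite big_nat_cond; apply: (dv_sum pP) => i /andP [/andP [_ hi] _].
apply: (dvD pP); first exact: E6.
have hmp : (i.+1 < p)%N by lia.
have ew : (p - i.+1)%N%:R = p%:R - i.+1%:R :> rat by rewrite natrB //; lia.
have pw : pint p ((p%:R - i.+1%:R)^-1).
  rewrite -ew; apply: (pint_inv pP); apply: (nd_k pP p3); lia.
have pu := pint_invpm hmp; have pv := pint_invm hmp.
have -> : rho i = p%:R^+4 * (4 * ((i.+1%:R)^-1 ^+ 3 * (p%:R - i.+1%:R)^-1 * (p%:R + i.+1%:R)^-1)).
  by rewrite /rho /yy ew rho_eq.
apply: (dv_le pP (j := 4)) => //; apply: (dv_p 4).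
apply: (pintM pP); first exact: (pint_nat pP 4).
by rewrite !(pintM pP) // (pintX pP).
Qed.

End PB.

Lemma bb_half k : bb (-(1/2)) k = (poch (1/2) k)^+2 / (poch 1 k)^+2.
Proof.
rewrite /bb opprK poch1 (_ : -(1/2) + 1 = 1/2 :> rat) //.
Qed.

Unset Implicit Arguments.
Theorem theorem4p2 (p : nat) (hp : prime p) (hp3 : (3 < p)%N) :
  rat_congr p 3
    (\sum_(1 <= k < p) (poch (1/2) k)^+2 / (poch 1 k)^+2 * (k%:R)^-1)
    (-2 * harm p.-1./2)
  /\
  rat_congr p 2
    (\sum_(1 <= k < p) (poch (1/2) k)^+2 / (poch 1 k)^+2 * ((k%:R)^+2)^-1)
    (-2 * (harm p.-1./2)^+2).
Proof.
have op : odd p.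
  by case: (even_prime hp) => // e; move: hp3; rewrite e.
set n := p./2.
have hpn : p = n.*2.+1 by rewrite -[LHS]odd_double_half op.
have hn : p.-1./2 = n by rewrite hpn /= doubleK.
rewrite hn.
have e1 : \sum_(1 <= k < p) (poch (1/2) k)^+2 / (poch 1 k)^+2 * (k%:R)^-1 = S1 n.*2 (-(1/2)).
  by rewrite /S1 -hpn; apply: eq_bigr => k _; rewrite bb_half.
have e2 : \sum_(1 <= k < p) (poch (1/2) k)^+2 / (poch 1 k)^+2 * ((k%:R)^+2)^-1 = S2 n.*2 (-(1/2)).
  by rewrite /S2 -hpn; apply: eq_bigr => k _; rewrite bb_half.
have hnn : (n <= n.*2)%N by rewrite -addnn leq_addl.
rewrite e1 e2 -(S1_nat hnn) -(S2_nat hnn).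
split; apply: (dv_congr hp).
  have h3 := S_three hp hp3 hpn.
  have hd := Ddv hp hp3 hpn.
  have -> : S1 n.*2 (-(1/2)) - S1 n.*2 n%:R =
    8^-1 * ((S1 n.*2 (n%:R + p%:R) - 9 * S1 n.*2 n%:R + 8 * S1 n.*2 (-(1/2))) -
            (S1 n.*2 (n%:R + p%:R) - S1 n.*2 n%:R)).
    by field.
  apply: (dvMl hp).
    apply: (pint_inv hp); rewrite (_ : 8 = 2 ^ 3)%N // Euclid_dvdX // andbT.
    by apply/negP => /(dvdn_leq (isT : (0 < 2)%N)) => h; lia.
  apply: (dvB hp) => //; exact: (dv_le hp _ h3).
have h2 := S_two hp hp3 hpn.
have -> : S2 n.*2 (-(1/2)) - S2 n.*2 n%:R = - (S2 n.*2 n%:R - S2 n.*2 (-(1/2))) by ring.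
exact: (dvN hp).
Qed.
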